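(* Let $n\geq 3$ and let $F=\sigma_{n-1}$ be the $(n-1)$-th elementary symmetric function on $\mathbb{R}^n$. For every constant $B>0$ there exists a constant $K_0\geq 1$, depending only on $n$ and $B$, with the following property. Let $\lambda=(\lambda_1,\dots,\lambda_n)\in\Gamma_{n-1}$ satisfy $F(\lambda)\leq B$ and $$\lambda_1=\cdots=\lambda_m>\lambda_{m+1}\geq\cdots\geq\lambda_n$$ for some $1\le m\le n$. If $\lambda_n<-K_0$, then $$-\sum_{p\neq q}F^{pp,qq}\xi_p\xi_q+\frac{\left(\sum_i F^{ii}\xi_i\right)^2}{F}+2\sum_{i>m}\frac{F^{ii}\xi_i^2}{\lambda_1-\lambda_i}-\frac{F^{11}\xi_1^2}{\lambda_1}\geq 0$$ for every vector $\xi=(\xi_1,\dots,\xi_n)\in\mathbb{R}^n$ satisfying $\xi_i=0$ for all $1<i\leq m$. Here $F$, $F^{ii}$, $F^{pp,qq}$ are evaluated at $\lambda$.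
   Context: $\sigma_k(\lambda)$ denotes the $k$-th elementary symmetric function of $\lambda\in\mathbb{R}^n$ (with $\sigma_0=1$). Gårding's cone is $\Gamma_k=\{\lambda\in\mathbb{R}^n:\sigma_j(\lambda)>0,\ 1\le j\le k\}$. For $\lambda\in\mathbb{R}^n$, $(\lambda|i)$ denotes the vector in $\mathbb{R}^{n-1}$ obtained by deleting the $i$-th component, and $(\lambda|ij)$ the vector obtained by deleting the $i$-th and $j$-th components. Then $F^{ii}=\frac{\partial \sigma_{n-1}}{\partial\lambda_i}(\lambda)=\sigma_{n-2}(\lambda|i)$ and, for $p\neq q$, $F^{pp,qq}=\frac{\partial^2\sigma_{n-1}}{\partial\lambda_p\partial\lambda_q}(\lambda)=\sigma_{n-3}(\lambda|pq)$. The paper states the dependence of $K_0$ as ''depending only on $n$ and $\max F$'', i.e. on an upper bound for $F(\lambda)$. *)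

(* Defs.v *)
From HB Require Import structures.
From mathcomp Require Import all_boot all_order all_algebra.
From mathcomp Require Import reals.
Set Implicit Arguments. Unset Strict Implicit. Unset Printing Implicit Defensive.
Import Order.TTheory GRing.Theory Num.Theory.
Local Open Scope ring_scope.

Section Defs.
Variables (R : realType) (n : nat).

Definition sigma_del (k : nat) (S : {set 'I_n}) (lam : 'I_n -> R) : R :=
  \sum_(A : {set 'I_n} | (#|A| == k) && [disjoint A & S]) \prod_(i in A) lam i.

Definition sigma (k : nat) (lam : 'I_n -> R) : R := sigma_del k set0 lam.

Definition Gamma (k : nat) (lam : 'I_n -> R) : Prop :=
  forall j : nat, (1 <= j <= k)%N -> 0 < sigma j lam.

Definition Fii (lam : 'I_n -> R) (i : 'I_n) : R := sigma_del (n - 2) [set i] lam.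

Definition Fpq (lam : 'I_n -> R) (p q : 'I_n) : R :=
  sigma_del (n - 3) [set p; q] lam.

(* the k-th component (0-based) of a vector; 0 if out of range *)
Definition comp_at (v : 'I_n -> R) (k : nat) : R :=
  if (insub k : option 'I_n) is Some i then v i else 0.

End Defs.

(* Main.v *)
Require Import Defs.
From HB Require Import structures.
From mathcomp Require Import all_boot all_order all_algebra.
From mathcomp Require Import reals.
From mathcomp Require Import zify ring lra.
Import Order.TTheory GRing.Theory Num.Theory.
Local Open Scope ring_scope.
Set Implicit Arguments. Unset Strict Implicit. Unset Printing Implicit Defensive.

Section Comb.
Variables (R : realType) (n : nat).

Lemma sigma_del_compl (S : {set 'I_n}) (k : nat) (lam : 'I_n -> R) :
  (k + #|S|).+1 = n ->
  sigma_del k S lam = \sum_(r in ~: S) \prod_(i in ~: (r |: S)) lam i.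
Proof.
move=> hk; rewrite /sigma_del.
have inj: {in ~: S &, injective (fun r => ~: (r |: S))}.
  move=> r r' hr hr' /setC_inj e.
  have : r \in r' |: S by rewrite -e setU11.
  rewrite in_setU1 => /orP [/eqP //|rS].
  by move: hr; rewrite in_setC rS.
rewrite -(big_imset (fun A : {set 'I_n} => \prod_(i in A) lam i) inj) /=.
apply: eq_bigl => A.
apply/andP/imsetP.
- case=> /eqP cA dAS.
  have sub: S \subset ~: A by rewrite -disjoints_subset disjoint_sym.
  have c: #|~: A :\: S| = 1%N.
    rewrite cardsD (setIidPr sub).
    have := cardsC A; rewrite card_ord cA => h.
    apply/eqP; rewrite -(eqn_add2r #|S|) subnK; last first.
      by rewrite -(setIidPr sub) subset_leq_card // subsetIl.
    apply/eqP; lia.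
  move/eqP/cards1P: c => [r hr].
  have rA : r \in ~: A :\: S by rewrite hr set11.
  exists r; first by move: rA; rewrite !inE => /andP [].
  apply: setC_inj; rewrite setCK -hr.
  apply/setP => i; rewrite !inE.
  case iS: (i \in S); last by rewrite ?andbT ?orbF.
  by rewrite orbT; move/subsetP: sub => /(_ i iS); rewrite inE.
- case=> r hr ->; split.
    have := cardsC (r |: S); rewrite card_ord cardsU1.
    move: hr; rewrite in_setC => /negbTE -> h.
    move: h; rewrite /= add1n => h; have e: (#|S|.+1 + k)%N = n by rewrite addSn addnC hk.
    apply/eqP/(@addnI #|S|.+1); exact: (etrans h (esym e)).
  apply/pred0P => i; rewrite /= !inE; by case: (i \in S); rewrite ?orbT ?andbF.
Qed.


Variable lam : 'I_n -> R.
Hypothesis nz : forall i, lam i != 0.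
Let P := \prod_i lam i.
Let s := \sum_i (lam i)^-1.

Lemma prodT_split (T : {set 'I_n}) :
  P = \prod_(i in T) lam i * \prod_(i in ~: T) lam i.
Proof.
rewrite /P (bigID (mem T)) /=; congr (_ * _); apply: eq_bigl => i; by rewrite !inE.
Qed.

Lemma prodS_neq0 (T : {set 'I_n}) : \prod_(i in T) lam i != 0.
Proof. by apply/prodf_neq0 => i _; exact: nz. Qed.

Lemma prod_compl (T : {set 'I_n}) :
  \prod_(i in ~: T) lam i = P / \prod_(i in T) lam i.
Proof.
by rewrite (prodT_split T) [X in X / _]mulrC mulfK // prodS_neq0.
Qed.

Lemma sig_compl (S : {set 'I_n}) (k : nat) : (k + #|S|).+1 = n ->
  sigma_del k S lam = P / \prod_(i in S) lam i * \sum_(r in ~: S) (lam r)^-1.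
Proof.
move=> hk; rewrite sigma_del_compl // big_distrr /=; apply: eq_bigr => r hr.
rewrite prod_compl big_setU1 /=; last by move: hr; rewrite inE.
by rewrite invfM mulrA mulrAC.
Qed.

Lemma sigma_n1 : (0 < n)%N -> sigma (n - 1) lam = P * s.
Proof.
move=> hn; rewrite /sigma sig_compl; last by rewrite cards0; lia.
rewrite big_set0 divr1 /s; congr (_ * _); apply: eq_bigl => i; by rewrite !inE.
Qed.

Lemma Fii_eq i : (1 < n)%N -> Fii lam i = P / lam i * (s - (lam i)^-1).
Proof.
move=> hn; rewrite /Fii sig_compl; last by rewrite cards1; lia.
have -> : s - (lam i)^-1 = \sum_(j in ~: [set i]) (lam j)^-1.
  rewrite /s (bigD1 i) //=.
  have -> : \sum_(j in ~: [set i]) (lam j)^-1 = \sum_(j | j != i) (lam j)^-1.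
    apply: eq_bigl => j; by rewrite !inE.
  ring.
by rewrite big_set1.
Qed.

Lemma Fpq_eq p q : (2 < n)%N -> p != q ->
  Fpq lam p q = P / (lam p * lam q) * (s - (lam p)^-1 - (lam q)^-1).
Proof.
move=> hn hpq; rewrite /Fpq sig_compl; last by rewrite cards2 hpq; lia.
rewrite big_setU1 /=; last by rewrite inE.
have -> : s - (lam p)^-1 - (lam q)^-1 = \sum_(j in ~: [set p; q]) (lam j)^-1.
  rewrite /s (bigD1 p) //= (bigD1 q) /=; last by rewrite eq_sym.
  have -> : \sum_(j in ~: [set p; q]) (lam j)^-1 = \sum_(i | (i != p) && (i != q)) (lam i)^-1.
    apply: eq_bigl => j; rewrite !inE; by case: (j == p); case: (j == q).
  ring.
by rewrite big_set1.
Qed.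

End Comb.

Section Shift.
Variables (R : realType) (n : nat).

Lemma prod_shift_r (lam : 'I_n -> R) (t : R) (r : 'I_n) :
  \prod_(i in ~: [set r]) (lam i + t) =
  \sum_(J : {set 'I_n}) (if r \in J then 0 else t ^+ (n - #|J| - 1) * \prod_(i in J) lam i).
Proof.
pose F i := if i == r then 0 else lam i.
pose G i := if i == r then 1 else t.
have -> : \prod_(i in ~: [set r]) (lam i + t) = \prod_i (F i + G i).
  rewrite big_mkcond /=; apply: eq_bigr => i _; rewrite /F /G !inE.
  by case: (i == r); rewrite ?add0r.
rewrite bigA_distr; apply: eq_bigr => J _.
rewrite (bigID (mem J)) /=.
have -> : \prod_(i | i \in J) (if i \in J then F i else G i) = \prod_(i in J) F i.
  by apply: eq_bigr => i ->.
have -> : \prod_(i | i \notin J) (if i \in J then F i else G i) = \prod_(i in ~: J) G i.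
  rewrite [LHS]big_mkcond [RHS]big_mkcond; apply: eq_bigr => i _; rewrite inE.
  by case: (i \in J).
case: ifP => rJ.
  by rewrite (bigD1 r) //= /F eqxx !mul0r.
have -> : \prod_(i in J) F i = \prod_(i in J) lam i.
  apply: eq_bigr => i iJ; rewrite /F; case: eqP => // e.
  by move: rJ; rewrite -e iJ.
have rCJ : r \in ~: J by rewrite inE rJ.
rewrite (big_setD1 r rCJ) /=.
rewrite {1}/G eqxx mul1r.
have -> : \prod_(i in ~: J :\ r) G i = \prod_(i in ~: J :\ r) t.
  by apply: eq_bigr => i; rewrite !inE /G => /andP [/negbTE -> _].
rewrite prodr_const mulrC; congr (_ * _); congr (_ ^+ _).
have := cardsD1 r (~: J); rewrite inE rJ /= add1n.
have := cardsC J; rewrite card_ord => h1 h2.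
move: h1 h2; set a := #|~: J|; set b := #|~: J :\ r|; set c := #|J|. clearbody a b c; lia.
Qed.

Lemma shift_expand (lam : 'I_n -> R) (t : R) : (0 < n)%N ->
  sigma (n - 1) (fun i => lam i + t) =
  \sum_(J : {set 'I_n}) (n - #|J|)%:R * (t ^+ (n - #|J| - 1) * \prod_(i in J) lam i).
Proof.
move=> hn; rewrite /sigma sigma_del_compl; last by rewrite cards0; lia.
have -> : \sum_(r in ~: set0) \prod_(i in ~: (r |: set0)) (lam i + t) =
          \sum_r \prod_(i in ~: [set r]) (lam i + t).
  apply: eq_big => r; first by rewrite !inE.
  by rewrite setU0.
under eq_bigr => r _ do rewrite prod_shift_r.
rewrite exchange_big /=; apply: eq_bigr => J _.
rewrite (bigID (mem J)) /= big1 ?add0r; last by move=> i ->.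
have -> : \sum_(i | i \notin J) (if i \in J then 0 else t ^+ (n - #|J| - 1) * \prod_(i0 in J) lam i0)
   = \sum_(i in ~: J) (t ^+ (n - #|J| - 1) * \prod_(i0 in J) lam i0).
  rewrite [LHS]big_mkcond [RHS]big_mkcond; apply: eq_bigr => i _; rewrite inE.
  by case: (i \in J).
rewrite sumr_const mulr_natl; congr (_ *+ _).
move: (cardsC J); rewrite card_ord; set a := #|~: J|; set c := #|J|; clearbody a c; lia.
Qed.


Lemma disj0 (A : {set 'I_n}) : [disjoint A & (set0 : {set 'I_n})].
Proof. by apply/pred0P => i /=; rewrite inE andbF. Qed.

Lemma sum_by_card (lam : 'I_n -> R) (f : nat -> R) :
  \sum_(J : {set 'I_n}) f #|J| * \prod_(i in J) lam i =
  \sum_(k < n.+1) f k * sigma k lam.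
Proof.
rewrite (partition_big (fun J : {set 'I_n} => (inord #|J| : 'I_n.+1)) predT) //=.
apply: eq_bigr => k _; rewrite /sigma /sigma_del big_distrr /=.
apply: eq_big => J.
  have hJ : (#|J| < n.+1)%N by rewrite ltnS; apply: leq_trans (max_card _) _; rewrite card_ord.
  rewrite disj0 andbT; apply/eqP/eqP => [e|e]; first by rewrite -e inordK.
  by apply: val_inj; rewrite /= inordK.
move=> /eqP <-; rewrite inordK // ltnS; apply: leq_trans (max_card _) _; by rewrite card_ord.
Qed.

Lemma sigma0_ge0 (lam : 'I_n -> R) : 0 <= sigma 0 lam.
Proof.
apply: sumr_ge0 => A /andP [/eqP /cards0_eq -> _]; by rewrite big_set0.
Qed.

Lemma shift_pos (lam : 'I_n -> R) (t : R) : (1 < n)%N -> Gamma (n - 1) lam -> 0 <= t ->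
  0 < sigma (n - 1) (fun i => lam i + t).
Proof.
move=> hn hG ht; rewrite shift_expand; last by lia.
rewrite [X in 0 < X](_ : _ = \sum_(k < n.+1) (n - k)%:R * t ^+ (n - k - 1) * sigma k lam); last first.
  rewrite -(sum_by_card lam (fun k => (n - k)%:R * t ^+ (n - k - 1))).
  by apply: eq_bigr => J _; rewrite mulrA.
have hk : (n - 1 < n.+1)%N by lia.
rewrite (bigD1 (Ordinal hk)) //=.
apply: ltr_pwDl.
  have -> : (n - (n - 1))%N = 1%N by lia.
  rewrite subnn expr0 mulr1 mul1r; apply: hG; apply/andP; split; lia.
apply: sumr_ge0 => k _.
case: (ltnP k n) => hkn.
  apply: mulr_ge0; first by apply: mulr_ge0; [apply: ler0n | apply: exprn_ge0].
  case: (posnP k) => [-> | hk0]; first exact: sigma0_ge0.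
  apply/ltW/hG; apply/andP; split; lia.
have -> : (n - k)%N = 0%N by lia.
by rewrite mul0r mul0r.
Qed.


Lemma two_nonpos_contra (lam : 'I_n -> R) (a b : 'I_n) : (1 < n)%N -> Gamma (n - 1) lam ->
  a != b -> lam b <= lam a -> lam a <= 0 -> (forall j, j != b -> lam a <= lam j) -> False.
Proof.
move=> hn hG ab hba ha hj.
have key : sigma (n - 1) (fun i => lam i + - lam a) <= 0.
  rewrite /sigma sigma_del_compl; last by rewrite cards0; lia.
  have -> : \sum_(r in ~: set0) \prod_(i in ~: (r |: set0)) (lam i + - lam a) =
            \sum_r \prod_(i in ~: [set r]) (lam i + - lam a).
    apply: eq_big => r; first by rewrite !inE.
    by rewrite setU0.
  rewrite (bigD1 a) //= [X in _ + X]big1 ?addr0; last first.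
    move=> r ra; rewrite (bigD1 a) /=; last by rewrite !inE eq_sym.
    by rewrite subrr mul0r.
  rewrite (big_setD1 b) /=; last by rewrite !inE eq_sym.
  apply: mulr_le0_ge0; first by rewrite subr_le0.
  apply: prodr_ge0 => i; rewrite !inE => /andP [ib _]; rewrite subr_ge0; exact: hj.
have := shift_pos (t := - lam a) hn hG; rewrite oppr_ge0 => /(_ ha).
by rewrite ltNge key.
Qed.

End Shift.

Section Scalar.
Variable R : realFieldType.

Lemma quad_psd (A C x mu : R) : 0 < A -> 1 <= A * C -> 0 <= A * x ^+ 2 - 2 * mu * x + C * mu ^+ 2.
Proof.
move=> hA hAC.
have h : 0 <= A * (A * x ^+ 2 - 2 * mu * x + C * mu ^+ 2).
  have -> : A * (A * x ^+ 2 - 2 * mu * x + C * mu ^+ 2) = (A * x - mu) ^+ 2 + (A * C - 1) * mu ^+ 2 by ring.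
  apply: addr_ge0; first exact: sqr_ge0.
  by apply: mulr_ge0; [rewrite subr_ge0 | exact: sqr_ge0].
by rewrite pmulr_rge0 in h.
Qed.

Lemma term_mid (F P l l0 xi mu : R) : 0 < l -> l < l0 -> P < 0 -> 0 < F ->
  2 * mu * (xi / l ^+ 2) - mu ^+ 2 * ((l^-1 - l0^-1) / (- 2 * P)) <=
  (F - 2 * P / l) * (xi / l) ^+ 2 + 2 * ((F - P / l) / l * xi ^+ 2 / (l0 - l)).
Proof.
move=> hl hll0 hP hF.
set x := xi / l ^+ 2.
have hl0 : 0 < l0 by apply: lt_trans hll0.
have hd : 0 < l0 - l by rewrite subr_gt0.
set A := F * l ^+ 2 - 2 * P * l + 2 * l ^+ 2 * (F * l - P) / (l0 - l).
set C := (l^-1 - l0^-1) / (- 2 * P).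
have eT : (F - 2 * P / l) * (xi / l) ^+ 2 + 2 * ((F - P / l) / l * xi ^+ 2 / (l0 - l)) = A * x ^+ 2.
  rewrite /A /x; field; by rewrite ?(gt_eqF hl) ?(gt_eqF hd) ?(gt_eqF hl0) ?(lt_eqF hP) ?mulf_neq0 ?oppr_eq0 ?(gt_eqF hl) ?(gt_eqF hl0) ?(lt_eqF hP) //.
have hA1 : 0 < F * l ^+ 2 - 2 * P * l.
  apply: ltr_wpDl (ltW _) _; first by apply: mulr_gt0 => //; exact: exprn_gt0.
  rewrite -mulNr; apply: mulr_gt0 => //; nra.
have hA : 0 < A.
  rewrite /A; apply: ltr_wpDr => //.
  apply: divr_ge0; last exact: ltW.
  apply: mulr_ge0; first by apply: mulr_ge0 => //; exact: sqr_ge0.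
  nra.
have hAC : 1 <= A * C.
  rewrite /A /C.
  have e : A * C = (F * l ^+ 2 * (l0 - l) - 2 * P * l * (l0 - l) + 2 * l ^+ 2 * (F * l - P)) / (l * l0 * (- 2 * P)).
    rewrite /A /C; field; by rewrite ?(gt_eqF hl) ?(gt_eqF hd) ?(gt_eqF hl0) ?(lt_eqF hP) ?mulf_neq0 ?oppr_eq0 ?(gt_eqF hl) ?(gt_eqF hl0) ?(lt_eqF hP) //.
  have hK : 0 < l * l0 * (- 2 * P) by apply: mulr_gt0; [exact: mulr_gt0 | nra].
  rewrite /A /C in e; rewrite e ler_pdivlMr // mul1r.
  have h1 : 0 <= F * l ^+ 2 * (l0 - l) by apply: mulr_ge0; [apply: mulr_ge0; [exact: ltW | exact: sqr_ge0] | exact: ltW].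
  have h2 : 0 <= F * l ^+ 3 by apply: mulr_ge0; [exact: ltW | apply: exprn_ge0; exact: ltW].
  have -> : F * l ^+ 2 * (l0 - l) - 2 * P * l * (l0 - l) + 2 * l ^+ 2 * (F * l - P) = 
     F * l ^+ 2 * (l0 - l) + 2 * (F * l ^+ 3) + l * l0 * (- 2 * P) by ring.
  lra.
rewrite eT -subr_ge0.
have := quad_psd x mu hA hAC.
congr (_ <= _); rewrite /C; ring.
Qed.


Lemma quad2_psd (a b c U y : R) : 0 < a -> b ^+ 2 <= a * c ->
  0 <= a * U ^+ 2 + 2 * b * U * y + c * y ^+ 2.
Proof.
move=> ha hb.
have h : 0 <= a * (a * U ^+ 2 + 2 * b * U * y + c * y ^+ 2).
  have -> : a * (a * U ^+ 2 + 2 * b * U * y + c * y ^+ 2) = (a * U + b * y) ^+ 2 + (a * c - b ^+ 2) * y ^+ 2 by ring.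
  apply: addr_ge0; first exact: sqr_ge0.
  by apply: mulr_ge0; [rewrite subr_ge0 | exact: sqr_ge0].
by rewrite pmulr_rge0 in h.
Qed.

Lemma term_0 (P s l0 xi mu : R) : 0 < l0 -> P < 0 ->
  2 * mu * (xi / l0 ^+ 2) - mu ^+ 2 * (l0^-1 / - P) <=
  (P * s - 2 * P / l0) * (xi / l0) ^+ 2 - P / l0 * (s - l0^-1) * xi ^+ 2 / l0.
Proof.
move=> hl0 hP.
have hA : 0 < - P * l0 by apply: mulr_gt0 => //; rewrite oppr_gt0.
have e : (P * s - 2 * P / l0) * (xi / l0) ^+ 2 - P / l0 * (s - l0^-1) * xi ^+ 2 / l0
   = (- P * l0) * (xi / l0 ^+ 2) ^+ 2.
  field; by rewrite gt_eqF.
rewrite e -subr_ge0.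
have := quad_psd (xi / l0 ^+ 2) mu hA (C := l0^-1 / - P).
have -> : - P * l0 * (l0^-1 / - P) = 1.
  field; by rewrite (gt_eqF hl0) (lt_eqF hP).
move=> /(_ (lexx _)); congr (_ <= _); ring.
Qed.

Lemma term_final (P s lL l0 xi U : R) : lL < 0 -> 0 < l0 -> P < 0 -> s < 0 ->
  0 < s - lL^-1 -> -1 <= s * l0 ->
  0 <= (P * s - 2 * P / lL) * (xi / lL) ^+ 2 + 2 * (P / lL * (s - lL^-1) * xi ^+ 2 / (l0 - lL))
       + (2 * (U / ((s - lL^-1) / (- 2 * P))) * U - (U / ((s - lL^-1) / (- 2 * P))) ^+ 2 * ((s - lL^-1) / (- 2 * P)))
       + P / s * (U + xi / lL ^+ 2) ^+ 2.
Proof.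
move=> hL hl0 hP hs hsig hcond.
set V := (s - lL^-1) / (- 2 * P).
set mu := U / V.
set y := xi / lL ^+ 2.
set q := - lL.
set u := lL * s.
have hq : 0 < q by rewrite oppr_gt0.
have hu : 0 < u by rewrite /u; nra.
have hu1 : u < 1.
  have : lL * (s - lL^-1) < 0 by nra.
  rewrite mulrBr mulfV ?(lt_eqF hL) // /u; lra.
have hul0 : u * l0 <= q.
  rewrite /u /q; have : lL * (s * l0) <= lL * (-1) by rewrite ler_wnM2l // ltW.
  rewrite mulrA mulrN1; lra.
have hPL : 0 < P * lL by nra.
have nzL : lL != 0 by rewrite lt_eqF.
have nzs : s != 0 by rewrite lt_eqF.
have nzP : P != 0 by rewrite lt_eqF.
have nzsig : s - lL^-1 != 0 by rewrite gt_eqF.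
have nzd : l0 - lL != 0 by rewrite gt_eqF // subr_gt0; apply: lt_trans hl0.
have nz1u : 1 - u != 0 by rewrite gt_eqF // subr_gt0.
have nzu : u != 0 by rewrite gt_eqF.
have nzsl : s * lL - 1 != 0 by rewrite lt_eqF // subr_lt0 mulrC.
have nzq : l0 + q != 0 by rewrite gt_eqF // addr_gt0.
pose aL := lL ^+ 2 * (P * s - 2 * P / lL) + 2 * P * (s - lL^-1) * lL ^+ 3 / (l0 - lL).
pose a := V^-1 + P / s.
pose b := P / s.
pose c := aL + P / s.
have eE : (P * s - 2 * P / lL) * (xi / lL) ^+ 2 + 2 * (P / lL * (s - lL^-1) * xi ^+ 2 / (l0 - lL))
       + (2 * mu * U - mu ^+ 2 * V) + P / s * (U + y) ^+ 2 = a * U ^+ 2 + 2 * b * U * y + c * y ^+ 2.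
  rewrite /a /b /c /aL /mu /y /V; field.
  by rewrite nzL nzs nzd nzP nzsl.
rewrite eE; apply: quad2_psd.
  have ea : a = P * lL * (2 / (1 - u) + 1 / u).
    rewrite /a /V /u; field.
    rewrite nzs nzL nzP nzsl andbT /= andbT; exact: nz1u.
  rewrite ea; apply: mulr_gt0 => //; apply: addr_gt0; apply: divr_gt0 => //; lra.
have ed : a * c - b ^+ 2 = (P * lL) ^+ 2 * ((2 * q * (1 + u) - u * (l0 + q)) / (u * (l0 + q))).
  rewrite /a /b /c /aL /V /u /q; field.
  by rewrite nzd nzs nzL nzP nzsl.
rewrite -subr_ge0 ed; apply: mulr_ge0; first exact: sqr_ge0.
apply: divr_ge0; first by nra.
apply: mulr_ge0; lra.
Qed.

End Scalar.

Section Main.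
Variables (R : realType) (n : nat) (lam xi : 'I_n -> R).
Hypothesis hn : (2 < n)%N.
Hypothesis nz : forall i, lam i != 0.

Let P := \prod_i lam i.
Let s := \sum_i (lam i)^-1.
Let a := \sum_i xi i / lam i.
Let b := \sum_i xi i / lam i ^+ 2.
Let D := \sum_i (P * s - 2 * P / lam i) * (xi i / lam i) ^+ 2.

Lemma sum_lin2 (f g : 'I_n -> R) (c1 c2 : R) :
  \sum_i (c1 * f i - c2 * g i) = c1 * \sum_i f i - c2 * \sum_i g i.
Proof. by rewrite sumrB -!mulr_sumr. Qed.

Lemma sum_lin3 (f g h : 'I_n -> R) (c1 c2 : R) :
  \sum_i (c1 * f i - c2 * g i - h i) = c1 * \sum_i f i - c2 * \sum_i g i - \sum_i h i.
Proof. by rewrite !sumrB -!mulr_sumr. Qed.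

Lemma inner_eq p :
  \sum_(q : 'I_n | p != q) Fpq lam p q * xi p * xi q =
  P * (xi p / lam p) * ((s - (lam p)^-1) * a - b) - P * (s - 2 * (lam p)^-1) * (xi p / lam p) ^+ 2.
Proof.
pose G q := P * (xi p / lam p) * ((s - (lam p)^-1) * (xi q / lam q) - xi q / lam q ^+ 2).
have full : \sum_q G q = P * (xi p / lam p) * ((s - (lam p)^-1) * a - b).
  by rewrite /G -mulr_sumr sumrB -mulr_sumr /a /b.
rewrite (bigD1 p) //= in full.
have -> : \sum_(q | p != q) Fpq lam p q * xi p * xi q = \sum_(q | q != p) G q.
  apply: eq_big => q; first by rewrite eq_sym.
  move=> hq; rewrite Fpq_eq // /G.
  have := nz p; have := nz q => hq' hp'.
  rewrite -/P -/s; field; by rewrite hq' hp'.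
have -> : \sum_(q | q != p) G q = P * (xi p / lam p) * ((s - (lam p)^-1) * a - b) - G p.
  by rewrite -full addrC addrK.
rewrite /G; congr (_ - _); have := nz p => hp'; field; by rewrite hp'.
Qed.

Lemma X1_eq :
  \sum_(p : 'I_n) \sum_(q : 'I_n | p != q) Fpq lam p q * xi p * xi q = P * s * a ^+ 2 - 2 * P * a * b - D.
Proof.
under eq_bigr => p _ do rewrite inner_eq.
have -> : \sum_p (P * (xi p / lam p) * ((s - (lam p)^-1) * a - b) - P * (s - 2 * (lam p)^-1) * (xi p / lam p) ^+ 2)
  = \sum_p ((P * s * a - P * b) * (xi p / lam p) - (P * a) * (xi p / lam p ^+ 2)
            - (P * s - 2 * P / lam p) * (xi p / lam p) ^+ 2).
  apply: eq_bigr => p _; have := nz p => hp'; field; by rewrite hp'.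
rewrite sum_lin3 -/a -/b -/D; ring.
Qed.

Lemma X2_eq : \sum_i Fii lam i * xi i = P * s * a - P * b.
Proof.
have -> : \sum_i Fii lam i * xi i = \sum_i ((P * s) * (xi i / lam i) - P * (xi i / lam i ^+ 2)).
  apply: eq_bigr => i _; rewrite Fii_eq //; last by lia.
  have := nz i => hi; rewrite -/P -/s; field; by rewrite hi.
by rewrite sum_lin2.
Qed.

Lemma X12_eq : P != 0 -> s != 0 ->
  - (\sum_(p : 'I_n) \sum_(q : 'I_n | p != q) Fpq lam p q * xi p * xi q)
  + (\sum_i Fii lam i * xi i) ^+ 2 / sigma (n - 1) lam = D + P / s * b ^+ 2.
Proof.
move=> hP hs; rewrite X1_eq X2_eq sigma_n1 //; last by lia.
rewrite -/P -/s; field; by rewrite hP hs.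
Qed.


Variables (m : nat) (i0 iL i2 : 'I_n) (B K0 : R).
Hypothesis h0L : i0 != iL.
Hypothesis h2L : i2 != iL.
Hypothesis h20 : i2 != i0.
Hypothesis hm0 : ~~ (m <= i0)%N.
Hypothesis hmL : (m <= iL)%N.
Hypothesis hpos : forall j, j != iL -> 0 < lam j.
Hypothesis hLK : lam iL < - K0.
Hypothesis hK1 : 1 <= K0.
Hypothesis hBK : B <= K0.
Hypothesis hFpos : 0 < sigma (n - 1) lam.
Hypothesis hFB : sigma (n - 1) lam <= B.
Hypothesis hlt : forall j : 'I_n, (m <= j)%N -> lam j < lam i0.
Hypothesis heq : forall j : 'I_n, ~~ (m <= j)%N -> lam j = lam i0.
Hypothesis hxi : forall j : 'I_n, j != i0 -> ~~ (m <= j)%N -> xi j = 0.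

Let Q := \prod_(i | i != iL) lam i.
Let sig := \sum_(i | i != iL) (lam i)^-1.

Lemma F_eq : sigma (n - 1) lam = P * s.
Proof. by rewrite sigma_n1 //; lia. Qed.

Lemma P_eq : P = lam iL * Q.
Proof. by rewrite /P (bigD1 iL). Qed.

Lemma Q_gt0 : 0 < Q.
Proof. by apply: prodr_gt0 => i; exact: hpos. Qed.

Lemma lL_lt0 : lam iL < 0.
Proof. apply: (lt_trans hLK); rewrite oppr_lt0; exact: (lt_le_trans ltr01 hK1). Qed.

Lemma P_lt0 : P < 0.
Proof. rewrite P_eq; have := lL_lt0; have := Q_gt0; nra. Qed.

Lemma s_lt0 : s < 0.
Proof. have := hFpos; rewrite F_eq => h; have := P_lt0; nra. Qed.

Lemma s_eq : s = (lam iL)^-1 + sig.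
Proof. by rewrite /s (bigD1 iL). Qed.

Lemma inv_le_sig j : j != iL -> (lam j)^-1 <= sig.
Proof.
move=> hj; rewrite /sig (bigD1 j) //= lerDl; apply: sumr_ge0 => i /andP [hi _].
by rewrite invr_ge0 ltW // hpos.
Qed.

Lemma sig_gt0 : 0 < sig.
Proof. apply: (lt_le_trans _ (inv_le_sig h0L)); by rewrite invr_gt0 hpos. Qed.

Lemma big_lam j : j != iL -> - lam iL < lam j.
Proof.
move=> hj.
have h1 : (lam j)^-1 < (- lam iL)^-1.
  apply: (le_lt_trans (inv_le_sig hj)); have := s_lt0; rewrite s_eq invrN; lra.
have hq : 0 < - lam iL by rewrite oppr_gt0 lL_lt0.
by rewrite -ltf_pV2 // ?posrE ?hpos.
Qed.

Lemma cond_s : -1 <= s * lam i0.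
Proof.
set q := - lam iL.
have hq : K0 < q by rewrite /q ltrNr.
have hq1 : 1 < q by apply: le_lt_trans hK1 hq.
have hl0 : 0 < lam i0 := hpos h0L.
have hQ : lam i0 * q <= Q.
  rewrite /Q (bigD1 i0) //= (bigD1 i2) /=; last by rewrite h2L h20.
  set rest := \prod_(i | _) _.
  have hr : 1 <= rest.
    have := @ler_prod R _ (index_enum _) (fun i => (i != iL) && (i != i0) && (i != i2)) (fun=> 1) lam.
    rewrite big1_eq /rest => H; apply: H => i /andP [/andP [hi _] _]; rewrite ler01 /=.
    by apply: ltW; apply: lt_trans hq1 (big_lam hi).
  have h2 : q <= lam i2 by apply: ltW; exact: big_lam.
  have hl2 : 0 < lam i2 := hpos h2L.
  rewrite ler_pM2l //; nra.
have hqq : q < q * q by rewrite -{1}[q]mulr1 ltr_pM2l // (lt_trans ltr01 hq1).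
have hF : sigma (n - 1) lam < q * q.
  by apply: le_lt_trans hFB _; apply: le_lt_trans hBK _; exact: lt_trans hq hqq.
rewrite F_eq in hF.
have hP := P_eq; rewrite -/q in hP.
have := P_lt0 => hPn.
have hs := s_lt0.
have hq0 : 0 < q by apply: lt_trans ltr01 hq1.
have eL : lam iL = - q by rewrite /q opprK.
have h2 : q * (- Q * s) < q * q.
  by have -> : q * (- Q * s) = P * s by rewrite hP eL; ring.
rewrite ltr_pM2l // in h2.
have h1 : - s * (lam i0 * q) <= - s * Q by rewrite ler_wpM2l // oppr_ge0 ltW.
have h3 : q * (- s * lam i0) < q * 1.
  have -> : q * (- s * lam i0) = - s * (lam i0 * q) by ring.
  rewrite mulr1; apply: le_lt_trans h1 _; have -> : - s * Q = - Q * s by ring.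
  exact: h2.
rewrite ltr_pM2l // in h3; lra.
Qed.


Let T (i : 'I_n) := (P * s - 2 * P / lam i) * (xi i / lam i) ^+ 2
  + (if (m <= i)%N then 2 * (P / lam i * (s - (lam i)^-1) * xi i ^+ 2 / (lam i0 - lam i)) else 0)
  - (if i == i0 then P / lam i0 * (s - (lam i0)^-1) * xi i0 ^+ 2 / lam i0 else 0).

Let w (i : 'I_n) := if i == i0 then (lam i0)^-1 / - P else ((lam i)^-1 - (lam i0)^-1) / (- 2 * P).

Lemma E_eq :
  - (\sum_(p : 'I_n) \sum_(q : 'I_n | p != q) Fpq lam p q * xi p * xi q)
  + (\sum_(i : 'I_n) Fii lam i * xi i) ^+ 2 / sigma (n - 1) lam
  + 2 * (\sum_(i : 'I_n | (m <= i)%N) Fii lam i * xi i ^+ 2 / (lam i0 - lam i))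
  - Fii lam i0 * xi i0 ^+ 2 / lam i0
  = \sum_i T i + P / s * b ^+ 2.
Proof.
rewrite X12_eq; last by rewrite lt_eqF // s_lt0.
  2: by rewrite lt_eqF // P_lt0.
have e3 : \sum_(i : 'I_n | (m <= i)%N) Fii lam i * xi i ^+ 2 / (lam i0 - lam i)
   = \sum_(i : 'I_n) (if (m <= i)%N then P / lam i * (s - (lam i)^-1) * xi i ^+ 2 / (lam i0 - lam i) else 0).
  rewrite big_mkcond; apply: eq_bigr => i _; case: ifP => // _; rewrite Fii_eq //; lia.
have e4 : Fii lam i0 * xi i0 ^+ 2 / lam i0
   = \sum_i (if i == i0 then P / lam i0 * (s - (lam i0)^-1) * xi i0 ^+ 2 / lam i0 else 0).
  rewrite (bigD1 i0) //= eqxx big1 ?addr0; first by rewrite Fii_eq //; lia.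
  by move=> j /negbTE ->.
have e5 : \sum_i T i = D + 2 * \sum_(i : 'I_n) (if (m <= i)%N then P / lam i * (s - (lam i)^-1) * xi i ^+ 2 / (lam i0 - lam i) else 0)
   - \sum_i (if i == i0 then P / lam i0 * (s - (lam i0)^-1) * xi i0 ^+ 2 / lam i0 else 0).
  rewrite /T sumrB big_split /=; congr (_ + _ - _).
  rewrite mulr_sumr; by apply: eq_bigr => i _; case: ifP; rewrite ?mulr0.
rewrite e3 e4 e5; ring.
Qed.

Lemma lower_i (mu : R) i : i != iL ->
  2 * mu * (xi i / lam i ^+ 2) - mu ^+ 2 * w i <= T i.
Proof.
move=> hi; rewrite /T /w.
have hP := P_lt0.
case: (eqVneq i i0) => [-> | hi0].
  rewrite (negbTE hm0) addr0 ?eqxx; apply: term_0 => //; exact: hpos.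
case: ifP => hmi.
  rewrite subr0.
  have hl := hpos hi.
  have hF : 0 < P * s by rewrite -F_eq.
  have := @term_mid R (P * s) P (lam i) (lam i0) (xi i) mu hl (hlt hmi) hP hF.
  have -> : (P * s - P / lam i) / lam i = P / lam i * (s - (lam i)^-1).
    by field; rewrite gt_eqF.
  by [].
have hx : xi i = 0 by apply: hxi => //; rewrite hmi.
have hl : lam i = lam i0 by apply: heq; rewrite hmi.
rewrite hx hl subrr !mul0r expr0n /= !mulr0 !subr0 addr0.
by [].
Qed.


Lemma W_le : \sum_(i | i != iL) w i <= (s - (lam iL)^-1) / (- 2 * P).
Proof.
have -> : s - (lam iL)^-1 = sig by rewrite s_eq; ring.
have hP := P_lt0.
have hP2 : P != 0 by rewrite lt_eqF.
have hl0 := hpos h0L.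
have c0 : 0 <= (lam i0)^-1 / (- 2 * P).
  by apply: divr_ge0; [rewrite invr_ge0 ltW | nra].
rewrite /sig mulr_suml -subr_ge0 -sumrB.
rewrite (bigD1 i0) //= (bigD1 i2) /=; last by rewrite h2L h20.
rewrite /w eqxx (negbTE h20).
set rest := \sum_(i | _) _.
have -> : (lam i0)^-1 / (- 2 * P) - (lam i0)^-1 / - P +
   ((lam i2)^-1 / (- 2 * P) - ((lam i2)^-1 - (lam i0)^-1) / (- 2 * P) + rest) = rest.
  field; by rewrite hP2 !nz.
apply: sumr_ge0 => i /andP [/andP [_ hi0] _]; rewrite (negbTE hi0).
have -> : (lam i)^-1 / (- 2 * P) - ((lam i)^-1 - (lam i0)^-1) / (- 2 * P) = (lam i0)^-1 / (- 2 * P).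
  field; by rewrite hP2 !nz.
exact: c0.
Qed.

Lemma main_ineq :
  0 <= - (\sum_(p : 'I_n) \sum_(q : 'I_n | p != q) Fpq lam p q * xi p * xi q)
  + (\sum_(i : 'I_n) Fii lam i * xi i) ^+ 2 / sigma (n - 1) lam
  + 2 * (\sum_(i : 'I_n | (m <= i)%N) Fii lam i * xi i ^+ 2 / (lam i0 - lam i))
  - Fii lam i0 * xi i0 ^+ 2 / lam i0.
Proof.
rewrite E_eq.
have hP := P_lt0.
set U := \sum_(i | i != iL) xi i / lam i ^+ 2.
set V := (s - (lam iL)^-1) / (- 2 * P).
set mu := U / V.
have eb : b = U + xi iL / lam iL ^+ 2 by rewrite /b (bigD1 iL) //= addrC.
rewrite eb (bigD1 iL) //=.
have hlow : 2 * mu * U - mu ^+ 2 * V <= \sum_(i | i != iL) T i.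
  apply: (@le_trans _ _ (\sum_(i | i != iL) (2 * mu * (xi i / lam i ^+ 2) - mu ^+ 2 * w i))).
    rewrite sumrB -!mulr_sumr lerD2l lerN2; apply: ler_wpM2l; first exact: sqr_ge0.
    exact: W_le.
  by apply: ler_sum => i hi; apply: lower_i.
have hTL : T iL = (P * s - 2 * P / lam iL) * (xi iL / lam iL) ^+ 2
     + 2 * (P / lam iL * (s - (lam iL)^-1) * xi iL ^+ 2 / (lam i0 - lam iL)).
  by rewrite /T hmL eq_sym (negbTE h0L) subr0.
have hsig : 0 < s - (lam iL)^-1.
  have -> : s - (lam iL)^-1 = sig by rewrite s_eq; ring.
  exact: sig_gt0.
have := term_final (xi iL) U lL_lt0 (hpos h0L) hP s_lt0 hsig cond_s.
rewrite -/V -/mu -hTL.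
move=> h; apply: (le_trans h); rewrite lerD2r lerD2l; exact: hlow.
Qed.

End Main.

Lemma comp_atE (R : realType) (n : nat) (v : 'I_n -> R) (k : nat) (hk : (k < n)%N) :
  comp_at v k = v (Ordinal hk).
Proof. by rewrite /comp_at insubT /=; congr v; exact: val_inj. Qed.
Arguments comp_atE {R n} v {k} hk.

Unset Implicit Arguments.

(* Indices are 0-based: paper's lambda_1 is comp_at lam 0, lambda_n is
   comp_at lam n.-1, and paper's index i > m corresponds to (m <= i)%N. *)
Theorem lemma3p1 (R : realType) (n : nat) (hn : (3 <= n)%N) (B : R) (hB : 0 < B) :
  exists K0 : R, 1 <= K0 /\
  forall (lam : 'I_n -> R) (m : nat),
    Gamma (n - 1) lam ->
    sigma (n - 1) lam <= B ->
    (1 <= m <= n)%N ->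
    (forall i : 'I_n, (i < m)%N -> lam i = comp_at lam 0) ->
    ((m < n)%N -> comp_at lam m < comp_at lam 0) ->
    (forall i j : 'I_n, (m <= i)%N -> (i <= j)%N -> lam j <= lam i) ->
    comp_at lam n.-1 < - K0 ->
    forall xi : 'I_n -> R,
      (forall i : 'I_n, (0 < i)%N -> (i < m)%N -> xi i = 0) ->
      0 <= - (\sum_(p : 'I_n) \sum_(q : 'I_n | p != q) Fpq lam p q * xi p * xi q)
           + (\sum_(i : 'I_n) Fii lam i * xi i) ^+ 2 / sigma (n - 1) lam
           + 2 * (\sum_(i : 'I_n | (m <= i)%N)
                    Fii lam i * xi i ^+ 2 / (comp_at lam 0 - lam i))
           - comp_at (Fii lam) 0 * comp_at xi 0 ^+ 2 / comp_at lam 0.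
Proof.
exists (1 + B); split; first by rewrite lerDl ltW.
move=> lam m hG hFB /andP [hm1 hmn] heq' hlt' hsort hL xi hxi'.
have h0 : (0 < n)%N by lia.
have hLn : (n.-1 < n)%N by lia.
have h2n : (n - 2 < n)%N by lia.
set i0 : 'I_n := Ordinal h0.
set iL : 'I_n := Ordinal hLn.
set i2 : 'I_n := Ordinal h2n.
rewrite !(comp_atE _ h0) -/i0.
rewrite (comp_atE _ hLn) -/iL in hL.
rewrite (comp_atE _ h0) -/i0 in heq' hlt'.
have h0L : i0 != iL by apply/eqP => /(congr1 val) /=; lia.
have h2L : i2 != iL by apply/eqP => /(congr1 val) /=; lia.
have h20 : i2 != i0 by apply/eqP => /(congr1 val) /=; lia.
have hC : forall j : 'I_n, lam j <= lam i0.
  move=> j; case: (ltnP j m) => hj; first by rewrite heq'.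
  have hmn' : (m < n)%N by apply: leq_ltn_trans hj (ltn_ord j).
  have := hlt' hmn'; rewrite (comp_atE _ hmn') => h.
  apply: le_trans (ltW h); apply: hsort => //=.
have hA : forall j : 'I_n, j != iL -> lam i2 <= lam j.
  move=> j hj; case: (ltnP j m) => hjm; first by rewrite (heq' j) // hC.
  apply: hsort => //=.
  have : val j != val iL by [].
  have := ltn_ord j; rewrite /=; lia.
have hBB : lam iL <= lam i2.
  case: (ltnP (n - 2) m) => h2m; first by rewrite (heq' i2) // hC.
  apply: hsort => //=; lia.
have hp2 : 0 < lam i2.
  rewrite ltNge; apply/negP => h2.
  by apply: (two_nonpos_contra (a := i2) (b := iL) _ hG h2L hBB h2 hA); lia.
have hpos : forall j, j != iL -> 0 < lam j.
  by move=> j hj; apply: lt_le_trans hp2 (hA j hj).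
have hK : 0 < 1 + B by apply: addr_gt0.
have hLneg : lam iL < 0 by apply: lt_trans hL _; rewrite oppr_lt0.
have hmn' : (m < n)%N.
  rewrite ltn_neqAle hmn andbT; apply/eqP => e.
  have : lam iL = lam i0 by apply: heq' => /=; lia.
  move=> e2; have := hpos i0 h0L; rewrite -e2 => h; by have := lt_trans h hLneg; rewrite ltxx.
have hmnL : (m <= iL)%N by rewrite /=; lia.
have hm0 : ~~ (m <= i0)%N by rewrite /= -ltnNge.
have hltm : forall j : 'I_n, (m <= j)%N -> lam j < lam i0.
  move=> j hj; have := hlt' hmn'; rewrite (comp_atE _ hmn') => h.
  apply: le_lt_trans h; apply: hsort => //=.
have heqm : forall j : 'I_n, ~~ (m <= j)%N -> lam j = lam i0.
  by move=> j; rewrite -ltnNge; exact: heq'.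
have hxim : forall j : 'I_n, j != i0 -> ~~ (m <= j)%N -> xi j = 0.
  move=> j hj; rewrite -ltnNge; apply: hxi'; rewrite lt0n; apply: contra hj => /eqP e.
  by apply/eqP/val_inj => /=; rewrite e.
have nz : forall j, lam j != 0.
  move=> j; case: (eqVneq j iL) => [->|hj]; first by rewrite lt_eqF.
  by rewrite gt_eqF // hpos.
have hFpos : 0 < sigma (n - 1) lam by apply: hG; apply/andP; split; lia.
have hK1 : 1 <= 1 + B by rewrite lerDl ltW.
have hBK : B <= 1 + B by rewrite lerDr.
exact: (main_ineq hn nz h0L h2L h20 hm0 hmnL hpos hL hK1 hBK hFpos hFB hltm heqm hxim).
Qed.
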